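(* There exist an environment $E$ and a total preorder $\succeq$ on $\Pi^E$ such that $\succeq\in\mathrm{Ord}_{\mathrm{MR}}(E)\cap\mathrm{Ord}_{\mathrm{LAR}}(E)$ but $\succeq\notin\mathrm{Ord}_{\mathrm{LTL}}(E)$.
   Context: An environment is a tuple $E=(\mathcal S,\mathcal A,\mathcal T,\mathcal I)$ where $\mathcal S,\mathcal A$ are finite nonempty sets, $\mathcal T:\mathcal S\times\mathcal A\to\Delta(\mathcal S)$ and $\mathcal I\in\Delta(\mathcal S)$. A policy is a map $\pi:\mathcal S\to\Delta(\mathcal A)$ (stationary, possibly stochastic); $\Pi^E$ denotes the set of all policies. A trajectory $\xi=(s_0,a_0,s_1,a_1,\dots)\in\Xi:=\mathcal S\times(\mathcal A\times\mathcal S)^\omega$ is generated under $\pi$ by $s_0\sim\mathcal I$, $a_t\sim\pi(s_t)$, $s_{t+1}\sim\mathcal T(s_t,a_t)$; $\mathbb E^\pi_\xi$ denotes expectation under this distribution. An objective-specification formalism $X$ assigns to each environment $E$ a set of objective specifications, each inducing a total preorder $\succeq$ on $\Pi^E$; $\mathrm{Ord}_X(E)$ is the set of total preorders so induced. A specification defining a scalar $J:\Pi^E\to\mathbb R$ induces $\pi_1\succeq\pi_2\iff J(\pi_1)\ge J(\pi_2)$. MR: specification $(\mathcal R,\gamma)$, $\mathcal R:\mathcal S\times\mathcal A\times\mathcal S\to\mathbb R$, $\gamma\in[0,1)$, $J(\pi)=\mathbb E^\pi_\xi[\sum_{t=0}^\infty\gamma^t\mathcal R(s_t,a_t,s_{t+1})]$.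 LAR: specification $(\mathcal R)$, $\mathcal R:\mathcal S\times\mathcal A\times\mathcal S\to\mathbb R$, $J(\pi)=\lim_{N\to\infty}\frac1N\mathbb E^\pi_\xi[\sum_{t=0}^{N-1}\mathcal R(s_t,a_t,s_{t+1})]$. LTL: specification $(\varphi)$ with $\varphi$ a linear temporal logic formula whose atomic propositions are the transitions $(s,a,s')\in\mathcal S\times\mathcal A\times\mathcal S$, built with $\neg,\lor,\land,\to$ and the temporal operators $\bigcirc$ (next), $\square$ (always), $\lozenge$ (eventually), $\mathcal U$ (until). Semantics on a trajectory $\xi$ at time $t$: an atomic proposition $(s,a,s')$ holds iff $(s_t,a_t,s_{t+1})=(s,a,s')$; $\bigcirc\psi$ holds iff $\psi$ holds at $t+1$; $\square\psi$ iff $\psi$ holds at every $t'\ge t$; $\lozenge\psi$ iff $\psi$ holds at some $t'\ge t$; $\psi\,\mathcal U\,\chi$ iff there is $t'\ge t$ with $\chi$ holding at $t'$ and $\psi$ holding at every $t''$ with $t\le t''<t'$; Boolean connectives as usual. $\varphi(\xi)=1$ if $\varphi$ holds at time $0$ and $0$ otherwise; $J(\pi)=\mathbb E^\pi_\xi[\varphi(\xi)]$. *)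

(* Defs.v *)
From HB Require Import structures.
From mathcomp Require Import all_boot all_order all_algebra.
From mathcomp Require Import all_classical all_reals.
From mathcomp Require Import topology normedtype sequences measure.
From mathcomp Require Import Rstruct Rstruct_topology.

Set Implicit Arguments.
Unset Strict Implicit.
Unset Printing Implicit Defensive.
Import Order.TTheory GRing.Theory Num.Theory.
Local Open Scope ring_scope.
Local Open Scope classical_set_scope.

Notation R := Rdefinitions.R.

Record env := Env {
  st : finType;
  act : finType;
  st_nonempty : (0 < #|st|)%N;
  act_nonempty : (0 < #|act|)%N;
  trans : st -> act -> st -> R;
  init : st -> R;
  trans_ge0 : forall s a s', 0 <= trans s a s';
  trans_sum1 : forall s a, \sum_(s' : st) trans s a s' = 1;
  init_ge0 : forall s, 0 <= init s;
  init_sum1 : \sum_(s : st) init s = 1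
}.

Record policy (E : env) := Policy {
  pol : st E -> act E -> R;
  pol_ge0 : forall s a, 0 <= pol s a;
  pol_sum1 : forall s, \sum_(a : act E) pol s a = 1
}.

Record traj (E : env) := Traj { traj_fun :> nat -> (st E * act E)%type }.

Definition st_pt (E : env) : st E := enum_val (Ordinal (st_nonempty E)).
Definition act_pt (E : env) : act E := enum_val (Ordinal (act_nonempty E)).

HB.instance Definition _ (E : env) := gen_eqMixin (traj E).
HB.instance Definition _ (E : env) := gen_choiceMixin (traj E).
HB.instance Definition _ (E : env) :=
  isPointed.Build (traj E) (Traj (fun _ => (st_pt E, act_pt E))).

Section Prefix.
Variables (E : env) (pi : policy E).

Fixpoint chain_prob (w : seq (st E * act E)) : R :=
  match w with
  | [::] => 1
  | p :: w' =>
      pol pi p.1 p.2 *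
      match w' with
      | [::] => 1
      | q :: _ => trans p.1 p.2 q.1 * chain_prob w'
      end
  end.

Definition prefix_prob (w : seq (st E * act E)) : R :=
  match w with
  | [::] => 1
  | p :: _ => init p.1 * chain_prob w
  end.

(* E^pi[ Rw(s_t, a_t, s_{t+1}) ], computed from the finite-dimensional
   distribution of the first t+2 state-action pairs. *)
Definition exp_reward (Rw : st E -> act E -> st E -> R) (t : nat) : R :=
  \sum_(w : (t.+2).-tuple (st E * act E))
    prefix_prob w *
    Rw (tnth w (inord t)).1 (tnth w (inord t)).2 (tnth w (inord t.+1)).1.

End Prefix.

Definition J_MR (E : env) (Rw : st E -> act E -> st E -> R) (gamma : R)
  (pi : policy E) : R :=
  limn (series (fun t => gamma ^+ t * exp_reward pi Rw t)).

Definition in_Ord_MR (E : env) (pref : policy E -> policy E -> Prop) : Prop :=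
  exists (Rw : st E -> act E -> st E -> R) (gamma : R),
    0 <= gamma < 1 /\
    forall pi1 pi2, pref pi1 pi2 <-> J_MR Rw gamma pi2 <= J_MR Rw gamma pi1.

Definition J_LAR (E : env) (Rw : st E -> act E -> st E -> R)
  (pi : policy E) : R :=
  limn (fun N : nat => N%:R^-1 * \sum_(t < N) exp_reward pi Rw t).

Definition in_Ord_LAR (E : env) (pref : policy E -> policy E -> Prop) : Prop :=
  exists (Rw : st E -> act E -> st E -> R),
    forall pi1 pi2, pref pi1 pi2 <-> J_LAR Rw pi2 <= J_LAR Rw pi1.

Inductive ltl (S A : Type) : Type :=
  | LAtom of S & A & S
  | LNot of ltl S A
  | LOr of ltl S A & ltl S A
  | LAnd of ltl S A & ltl S A
  | LImp of ltl S A & ltl S A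
  | LNext of ltl S A
  | LAlways of ltl S A
  | LEventually of ltl S A
  | LUntil of ltl S A & ltl S A.

Fixpoint ltl_holds (E : env) (phi : ltl (st E) (act E)) (xi : traj E) (t : nat)
  : Prop :=
  match phi with
  | LAtom s a s' => (xi t).1 = s /\ (xi t).2 = a /\ (xi t.+1).1 = s'
  | LNot p => ~ ltl_holds p xi t
  | LOr p q => ltl_holds p xi t \/ ltl_holds q xi t
  | LAnd p q => ltl_holds p xi t /\ ltl_holds q xi t
  | LImp p q => ltl_holds p xi t -> ltl_holds q xi t
  | LNext p => ltl_holds p xi t.+1
  | LAlways p => forall t', (t <= t')%N -> ltl_holds p xi t'
  | LEventually p => exists t', (t <= t')%N /\ ltl_holds p xi t'
  | LUntil p q => exists t', (t <= t')%N /\ ltl_holds q xi t' /\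
                    forall t'', (t <= t'')%N -> (t'' < t')%N -> ltl_holds p xi t''
  end.

Definition cyl (E : env) (w : seq (st E * act E)) : set (traj E) :=
  [set xi | mkseq xi (size w) = w].

Notation traj_space E := (g_sigma_algebraType (range (@cyl E))).

Definition is_traj_measure (E : env) (pi : policy E)
  (mu : {measure set (traj_space E) -> \bar R}) : Prop :=
  forall w, mu (cyl w) = (prefix_prob pi w)%:E.

Definition ltl_set (E : env) (phi : ltl (st E) (act E)) : set (traj_space E) :=
  [set xi | ltl_holds phi xi 0].

(* J(pi) = E^pi[phi(xi)] = mu_pi({xi | phi holds at 0}). *)
Definition in_Ord_LTL (E : env) (pref : policy E -> policy E -> Prop) : Prop :=
  exists phi : ltl (st E) (act E),
    forall (pi1 pi2 : policy E) (mu1 mu2 : {measure set (traj_space E) -> \bar R}),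
      is_traj_measure pi1 mu1 -> is_traj_measure pi2 mu2 ->
      (pref pi1 pi2 <-> (mu2 (ltl_set phi) <= mu1 (ltl_set phi))%E).

(* Main.v *)
Require Import Defs.
From mathcomp Require Import all_boot all_order all_algebra.
From mathcomp Require Import all_classical all_reals.
From mathcomp Require Import topology normedtype sequences measure.
From mathcomp Require Import Rstruct Rstruct_topology.
From mathcomp Require Import numfun.

Set Implicit Arguments.
Unset Strict Implicit.
Unset Printing Implicit Defensive.
Import Order.TTheory GRing.Theory Num.Theory.
Local Open Scope ring_scope.

Lemma card_unit_gt0 : (0 < #|{: unit}|)%N. Proof. by rewrite card_unit. Qed.
Lemma card_I3_gt0 : (0 < #|{: 'I_3}|)%N. Proof. by rewrite card_ord. Qed.

Lemma sum_unit (F : unit -> R) : \sum_(s : unit) F s = F tt.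
Proof. by rewrite (bigD1 tt) //= big1 ?addr0 // => -[]. Qed.

Definition E0 : env.
refine (@Env unit (ordinal 3) card_unit_gt0 card_I3_gt0
  (fun _ _ _ => 1) (fun _ => 1) _ _ _ _).
- by move=> *; exact: ler01.
- by move=> *; rewrite sum_unit.
- by move=> *; exact: ler01.
- by rewrite sum_unit.
Defined.

Lemma sum_tuple_cons (T : finType) n (F : n.+1.-tuple T -> R) :
  \sum_(w : n.+1.-tuple T) F w =
  \sum_(x : T) \sum_(w : n.-tuple T) F [tuple of x :: w].
Proof.
rewrite pair_big /=.
rewrite (reindex (fun p : T * n.-tuple T => [tuple of p.1 :: p.2])) //=.
exists (fun w => (thead w, [tuple of behead w])) => [[x w] _ | w _] /=.
- by rewrite theadE; congr pair; apply: val_inj.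
- by rewrite -tuple_eta.
Qed.

Section Pol.
Variable pi : policy E0.

Lemma sum_pol : \sum_(x : unit * 'I_3) pol pi x.1 x.2 = 1.
Proof.
rewrite -(pair_big xpredT xpredT (fun s a => pol pi s a)) /= sum_unit.
exact: (pol_sum1 pi tt).
Qed.

Lemma prefix_cons x (s : seq (unit * 'I_3)) : s != [::] ->
  prefix_prob pi (x :: s) = pol pi x.1 x.2 * prefix_prob pi s.
Proof. by case: s => [|q s] //= _; rewrite !mul1r. Qed.

Lemma sum_prefix n : \sum_(w : n.+1.-tuple (unit * 'I_3)) prefix_prob pi w = 1.
Proof.
elim: n => [|n IH].
  rewrite sum_tuple_cons -[RHS]sum_pol; apply: eq_bigr => x _.
  rewrite (eq_bigr (fun _ => pol pi x.1 x.2)); last first.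
    by move=> w _; rewrite tuple0 /= mul1r mulr1.
  by rewrite big_const card_tuple /= addr0.
rewrite sum_tuple_cons -[RHS]sum_pol; apply: eq_bigr => x _.
rewrite (eq_bigr (fun w : n.+1.-tuple _ => pol pi x.1 x.2 * prefix_prob pi w)); last first.
  by move=> w _; apply: prefix_cons; rewrite -size_eq0 size_tuple.
by rewrite -mulr_sumr IH mulr1.
Qed.

Definition Rw : st E0 -> act E0 -> st E0 -> R := fun _ a _ => (a : nat)%:R.

Definition v : R := \sum_(a : 'I_3) pol pi tt a * (a : nat)%:R.

Lemma exp_reward_S t : exp_reward pi Rw t.+1 = exp_reward pi Rw t.
Proof.
rewrite /exp_reward sum_tuple_cons.
rewrite (eq_bigr (fun x => pol pi x.1 x.2 * exp_reward pi Rw t)).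
  by rewrite -mulr_suml sum_pol mul1r.
move=> x _; rewrite /exp_reward mulr_sumr; apply: eq_bigr => w _.
rewrite prefix_cons; last by rewrite -size_eq0 size_tuple.
rewrite -mulrA; congr (_ * (_ * _)).
rewrite /Rw !(tnth_nth x) /= !inordK //.
Qed.

Lemma exp_reward_0 : exp_reward pi Rw 0 = v.
Proof.
rewrite /exp_reward sum_tuple_cons.
transitivity (\sum_(x : unit * 'I_3) pol pi x.1 x.2 * (x.2 : nat)%:R).
  apply: eq_bigr => x _.
  rewrite (eq_bigr (fun w : 1.-tuple _ => pol pi x.1 x.2 * (x.2:nat)%:R * prefix_prob pi w)).
    by rewrite -mulr_sumr sum_prefix mulr1.
  move=> w _.
  have -> : prefix_prob pi [tuple of x :: w] = pol pi x.1 x.2 * prefix_prob pi w.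
    by apply: prefix_cons; rewrite -size_eq0 size_tuple.
  by rewrite /Rw (tnth_nth x) inordK //= mulrAC.
rewrite -(pair_big xpredT xpredT (fun (s : unit) (a : 'I_3) => pol pi s a * (a : nat)%:R)) /=.
by rewrite sum_unit.
Qed.

Lemma J_MR_v : J_MR Rw 0 pi = v.
Proof.
rewrite /J_MR; apply: cvg_lim; first exact: Rhausdorff.
apply: (cvg_near_cst v); exists 1%N => // n /= Hn.
case: n Hn => // n _.
rewrite /series /= big_nat_recl // expr0 mul1r big1 ?addr0 ?exp_reward_0 // => i _.
by rewrite expr0n /= mul0r.
Qed.

Lemma exp_reward_v t : exp_reward pi Rw t = v.
Proof. by elim: t => [|t IH]; rewrite ?exp_reward_S ?exp_reward_0. Qed.

Lemma J_LAR_v : J_LAR Rw pi = v.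
Proof.
rewrite /J_LAR; apply: cvg_lim; first exact: Rhausdorff.
apply: (cvg_near_cst v); exists 1%N => // n /= Hn.
case: n Hn => // n _.
rewrite (eq_bigr (fun _ => v)); last by move=> i _; rewrite exp_reward_v.
rewrite sumr_const card_ord -[v *+ _]mulr_natl mulrA mulVf ?mul1r //.
by rewrite pnatr_eq0.
Qed.

End Pol.

Lemma mkseq_cst (T : Type) (c : T) n : mkseq (fun _ => c) n = nseq n c.
Proof. rewrite /mkseq; elim: n 0%N => //= n IH m; by rewrite IH. Qed.

Section Det.
Variable k : 'I_3.

Definition pk : policy E0.
refine (@Policy E0 (fun _ a => (a == k)%:R) _ _).
- by move=> s a; exact: ler0n.
- move=> s; rewrite (bigD1 k) //= eqxx big1 ?addr0 // => a /negbTE ->.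
  by [].
Defined.

Lemma v_pk : v pk = (k : nat)%:R.
Proof.
rewrite /v (bigD1 k) //= eqxx mul1r big1 ?addr0 // => a /negbTE ->.
by rewrite mul0r.
Qed.

Definition xik : traj E0 := Traj (fun _ => (tt, k) : st E0 * act E0).

Lemma chain_pk (w : seq (st E0 * act E0)) :
  chain_prob pk w = (all (fun p => p.2 == k) w)%:R.
Proof.
elim: w => [|p w IH] //.
case: w IH => [|q w] IH; first by rewrite /= mulr1 andbT.
have -> : chain_prob pk [:: p, q & w] = (p.2 == k)%:R * chain_prob pk (q :: w).
  by rewrite [LHS]/= mul1r.
by rewrite IH -natrM mulnb.
Qed.

Lemma prefix_pk (w : seq (st E0 * act E0)) :
  prefix_prob pk w = (all (fun p => p.2 == k) w)%:R.
Proof. case: w => [|p w] //; rewrite /prefix_prob chain_pk; exact: mul1r. Qed.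

Lemma pk_measure : is_traj_measure pk (\d_(xik : traj_space E0))%R.
Proof.
move=> w; transitivity ((xik \in (cyl w : set (traj E0)))%:R%:E : \bar R); first by [].
rewrite prefix_pk; congr (_%:R%:E).
have E : (mkseq xik (size w) == w) = all (fun p : st E0 * act E0 => p.2 == k) w.
  rewrite /xik /= mkseq_cst eq_sym.
  apply/eqP/idP => [H | H].
    apply/allP => -[[] a] Hin /=.
    have := allP (introT (all_pred1P _ _) H) _ Hin.
    by move=> /eqP [->].
  apply/all_pred1P/allP => -[[] a] Hin /=.
  by move/allP: H => /(_ _ Hin) /= /eqP ->.
rewrite -E.
case: (boolP (xik \in cyl w)) => H; apply/esym.
  by move/set_mem: H; rewrite /cyl /= => ->; rewrite eqxx.
case: eqP => // Hm; exfalso; move/negP: H; apply.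
apply: mem_set; exact: Hm.
Qed.
End Det.
Theorem mainTheorem10 :
  exists (E : env) (pref : policy E -> policy E -> Prop),
    in_Ord_MR pref /\ in_Ord_LAR pref /\ ~ in_Ord_LTL pref.
Proof.
exists E0, (fun pi1 pi2 => v pi2 <= v pi1); split; [|split].
- exists Rw, 0; split; first by rewrite lexx ltr01.
  by move=> p1 p2; rewrite !J_MR_v.
- by exists Rw => p1 p2; rewrite !J_LAR_v.
- move=> [phi H].
  pose k0 := @Ordinal 3 0 isT.
  pose k1 := @Ordinal 3 1 isT.
  pose k2 := @Ordinal 3 2 isT.
  have H01 := H (pk k0) (pk k1) _ _ (pk_measure k0) (pk_measure k1).
  have H12 := H (pk k1) (pk k2) _ _ (pk_measure k1) (pk_measure k2).
  have n01 : ~ (((xik k1 \in ltl_set phi)%:R)%:E <= ((xik k0 \in ltl_set phi)%:R)%:E :> \bar R)%E.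
    by move=> /(proj2 H01); rewrite !v_pk ler_nat.
  have n12 : ~ (((xik k2 \in ltl_set phi)%:R)%:E <= ((xik k1 \in ltl_set phi)%:R)%:E :> \bar R)%E.
    by move=> /(proj2 H12); rewrite !v_pk ler_nat.
  rewrite !lee_fin !ler_nat in n01 n12.
  case: (xik k1 \in _) in n01 n12.
  + by apply: n12; rewrite leq_b1.
  + by apply: n01.
Qed.
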